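(* Let $\mathcal{Y}$ be a finite nonempty set, $p,q$ probability distributions on $\mathcal{Y}$ with full support and $q$ not constant. Let $\Delta\ge0$ be such that there exists $\alpha\ge 0$ with $D_{\mathrm{KL}}(T(q,p,\alpha)\|p)=\Delta$; denote this (unique) $\alpha$ by $\alpha(\Delta)$ and let $\phi_\Delta=T(q,p,\alpha(\Delta))$. Let $\epsilon\in\mathbb{R}$ and let $\psi$ be a probability distribution on $\mathcal{Y}$ such that $$D_{\mathrm{KL}}(\psi\|p)\le\Delta\quad\text{and}\quad H(\psi\|q)\le H(\phi_\Delta\|q)+\epsilon.$$ Then $D_{\mathrm{KL}}(\psi\,\|\,\phi_\Delta)\le \alpha(\Delta)\,\epsilon$.
   Context: For distributions $a,b$ on a finite set, $H(a\|b)=\sum_y a(y)\log\frac{1}{b(y)}$ (cross entropy) and $D_{\mathrm{KL}}(a\|b)=\sum_y a(y)\log\frac{a(y)}{b(y)}$ (natural logarithms). The mismatched tilt is, for $\alpha\in\mathbb{R}$, $T(q,p,\alpha)(y)=\frac{p(y)q(y)^{\alpha}}{\sum_{z}p(z)q(z)^\alpha}$. (The distribution $\phi_\Delta$ is the optimal solution of minimizing $H(\phi\|q)$ subject to $D_{\mathrm{KL}}(\phi\|p)\le\Delta$.) *)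

(* Defs.v *)
From HB Require Import structures.
From mathcomp Require Import all_boot all_order all_algebra.
From mathcomp Require Import all_classical all_reals all_analysis.
Set Implicit Arguments. Unset Strict Implicit. Unset Printing Implicit Defensive.
Import Order.TTheory GRing.Theory Num.Theory.
Local Open Scope ring_scope.

Section Defs.
Context {R : realType} {Y : finType}.

Definition is_distr (a : Y -> R) : Prop :=
  (forall y, 0 <= a y) /\ \sum_(y : Y) a y = 1.

Definition full_support (a : Y -> R) : Prop := forall y, 0 < a y.

Definition cross_entropy (a b : Y -> R) : R :=
  \sum_(y : Y) a y * ln (b y)^-1.

(* KL divergence D(a||b) = sum_y a(y) log (a(y)/b(y)); with mathcomp's
   ln 0 = 0, terms with a(y) = 0 vanish (0 log 0 = 0 convention). *)
Definition KL (a b : Y -> R) : R :=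
  \sum_(y : Y) a y * ln (a y / b y).

Definition tilt (q p : Y -> R) (alpha : R) : Y -> R :=
  fun y => p y * q y `^ alpha / \sum_(z : Y) p z * q z `^ alpha.

End Defs.

(* Main.v *)
Require Import Defs.
From HB Require Import structures.
From mathcomp Require Import all_boot all_order all_algebra.
From mathcomp Require Import all_classical all_reals all_analysis.
From mathcomp Require Import ring lra.
Import Order.TTheory GRing.Theory Num.Theory.
Local Open Scope ring_scope.

Lemma ln_div' (R : realType) (x y : R) : 0 < x -> 0 < y -> ln (x / y) = ln x - ln y.
Proof.
move=> hx hy; rewrite lnM ?posrE ?invr_gt0 // lnV ?posrE //.
Qed.

Lemma KL_tilt_decomp (R : realType) (Y : finType) (p q a : Y -> R) (alpha : R) :
  (0 < #|Y|)%N -> full_support p -> full_support q -> is_distr a ->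
  KL a (tilt q p alpha) =
  KL a p + alpha * cross_entropy a q + ln (\sum_(z : Y) p z * q z `^ alpha).
Proof.
move=> hY hp hq [ha0 ha1].
set Z := \sum_(z : Y) p z * q z `^ alpha.
have hZ : 0 < Z.
  case/card_gt0P: hY => y0 _.
  rewrite /Z (bigD1 y0) //= ltr_pwDl ?mulr_gt0 ?powR_gt0 //.
  by apply: sumr_ge0 => i _; rewrite mulr_ge0 ?powR_ge0 // ltW.
rewrite /KL /cross_entropy mulr_sumr -big_split /=.
have -> : ln Z = \sum_(y : Y) a y * ln Z by rewrite -mulr_suml ha1 mul1r.
rewrite -big_split /=; apply: eq_bigr => y _.
have [->|ay] := eqVneq (a y) 0; first by rewrite !mul0r !mulr0 !addr0.
have apos : 0 < a y by rewrite lt_def ay ha0.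
have py := hp y; have qy := hq y.
have qa : 0 < q y `^ alpha by rewrite powR_gt0.
rewrite /tilt ln_div' ?divr_gt0 ?mulr_gt0 // ln_div' ?mulr_gt0 //.
rewrite lnM ?posrE // ln_powR ln_div' // lnV ?posrE //.
ring.
Qed.

Theorem mainTheorem2 (R : realType) (Y : finType) (p q : Y -> R)
  (Delta alpha eps : R) (psi : Y -> R) :
  (0 < #|Y|)%N ->
  is_distr p -> full_support p ->
  is_distr q -> full_support q ->
  (exists y1 y2 : Y, q y1 != q y2) ->
  0 <= Delta ->
  0 <= alpha ->
  KL (tilt q p alpha) p = Delta ->
  is_distr psi ->
  KL psi p <= Delta ->
  cross_entropy psi q <= cross_entropy (tilt q p alpha) q + eps ->
  KL psi (tilt q p alpha) <= alpha * eps.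
Proof.
move=> hY hpd hp hqd hq _ _ hal hD hpsi hKL hH.
set Z := \sum_(z : Y) p z * q z `^ alpha.
have hZ : 0 < Z.
  case/card_gt0P: hY => y0 _.
  rewrite /Z (bigD1 y0) //= ltr_pwDl ?mulr_gt0 ?powR_gt0 //.
  by apply: sumr_ge0 => i _; rewrite mulr_ge0 ?powR_ge0 // ltW.
have hphi : is_distr (tilt q p alpha).
  split.
    by move=> y; rewrite /tilt divr_ge0 ?mulr_ge0 ?powR_ge0 // ltW.
  by rewrite /tilt -mulr_suml -/Z divff // gt_eqF.
have h0 : KL (tilt q p alpha) (tilt q p alpha) = 0.
  rewrite /KL big1 // => y _.
  have [->|hy] := eqVneq (tilt q p alpha y) 0; first by rewrite mul0r.
  by rewrite divff // ln1 mulr0.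
have e1 := @KL_tilt_decomp _ _ p q psi alpha hY hp hq hpsi.
have e2 := @KL_tilt_decomp _ _ p q _ alpha hY hp hq hphi.
rewrite h0 hD -/Z in e2; rewrite e1 -/Z.
have : alpha * cross_entropy psi q <= alpha * (cross_entropy (tilt q p alpha) q + eps).
  by rewrite ler_wpM2l.
move=> h; rewrite mulrDr in h.
move: e2 hKL h.
generalize (cross_entropy (tilt q p alpha) q) (cross_entropy psi q) (KL psi p) (ln Z) => B A K L.
move=> e2 hKL h.
have -> : L = - Delta - alpha * B by lra.
lra.
Qed.
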